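(* Let $p$ be a prime, $q$ and $r$ powers of $p$, and $n$ an integer prime to $p$. Let $S^\times=(\mathbb Z/n\mathbb Z)^\times\times\mathbb F_q^\times$, with $\langle r\rangle$ acting by $r\cdot(i,\alpha)=(ri,\alpha^{1/r})$, and let $O^\times$ be the set of orbits. Then (1) $\sum_{o\in O^\times}|o|=|S^\times|=\varphi(n)(q-1)$; (2) $|O^\times|\ll q/\log q$; (3) $\sum_{o\in O^\times}\log|o|\ll q\log\log q/\log q$, where the implied constants depend only on $r$ and $n$ (and $q$ varies over powers of $p$).
   Context: $\varphi$ denotes Euler's totient function. *)

(* Defs.v *)
From HB Require Import structures.
From mathcomp Require Import all_boot all_order all_algebra.
From Stdlib Require Import Reals.
Set Implicit Arguments. Unset Strict Implicit. Unset Printing Implicit Defensive.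

Section Defs.
Local Open Scope ring_scope.
Variables (r n : nat) (F : finFieldType).

(* alpha^{1/r}: the y in F with y^r = alpha (unique when r is a power of char F). *)
Definition rroot (a : F) : F := odflt a [pick y : F | y ^+ r == a].

Definition mulr_mod (i : 'I_n) : 'I_n :=
  Ordinal (ltn_pmod (r * i)%N (leq_ltn_trans (leq0n i) (ltn_ord i))).

Definition ract (x : 'I_n * F) : 'I_n * F := (mulr_mod x.1, rroot x.2).

Definition Sx : {set 'I_n * F} := [set x : 'I_n * F | coprime x.1 n && (x.2 != 0)].

(* the <r>-orbit of x (r acts through a permutation of finite order,
   so the forward orbit is the full group orbit) *)
Definition rorbit (x : 'I_n * F) : {set 'I_n * F} := [set y | fconnect ract x y].

Definition Ox : {set {set 'I_n * F}} := [set rorbit x | x in Sx].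

End Defs.

(* Main.v *)
Require Import Defs.
From HB Require Import structures.
From mathcomp Require Import all_boot all_order all_algebra.
From Stdlib Require Import Reals.
From mathcomp Require Import all_boot all_algebra finfield cyclic.
From mathcomp Require Import zify.
From Stdlib Require Import Lra.
Set Implicit Arguments. Unset Strict Implicit. Unset Printing Implicit Defensive.
Import GRing.Theory.

Section Alg.
Variables (p k n : nat) (F : finFieldType) (m : nat).
Hypotheses (pp : prime p) (k0 : 0 < k) (cnp : coprime n p) (cardF : #|F| = p ^ m).
Local Notation r := (p ^ k).
Local Open Scope ring_scope.

Lemma m_gt0 : (0 < m)%N.
Proof.
case: m cardF => // cF.
have : (2 <= #|F|)%N.
  have <- : #|[set (0 : F); 1]| = 2%N by rewrite cards2 eq_sym GRing.oner_neq0.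
  exact: max_card.
by rewrite cF expn0.
Qed.

Lemma powK (x : F) j : x ^+ (p ^ (m * j)) = x.
Proof.
elim: j => [|j IH]; first by rewrite muln0 expn0 expr1.
by rewrite mulnS expnD exprM -cardF expf_card IH.
Qed.

Lemma rpowK (x : F) : x ^+ (r ^ m) = x.
Proof. by rewrite -expnM mulnC powK. Qed.

Lemma rpowKt (x : F) t : x ^+ ((r ^ m) ^ t) = x.
Proof.
elim: t => [|t IH]; first by rewrite expn0 expr1.
by rewrite expnS mulnC exprM IH rpowK.
Qed.

Lemma rroot_spec (a : F) : rroot r a ^+ r = a.
Proof.
rewrite /rroot; case: pickP => [y /eqP -> //|/(_ (a ^+ (r ^ m.-1)))].
by rewrite -exprM -expnSr prednK ?m_gt0 // rpowK eqxx.
Qed.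

Lemma iter_rroot j (a : F) : (iter j (@rroot r F) a) ^+ (r ^ j) = a.
Proof.
elim: j a => [|j IH] a; first by rewrite expr1.
by rewrite iterSr expnSr exprM IH rroot_spec.
Qed.


Local Close Scope ring_scope.
Lemma n_gt0 : (0 < n)%N.
Proof.
move: cnp; case: (n) => // ; rewrite /coprime gcd0n => /eqP p1.
by move: pp; rewrite p1.
Qed.

Lemma cop_r : coprime r n.
Proof. by rewrite coprime_pexpl // coprime_sym. Qed.

Local Notation ra := (@ract r n F).
Local Notation mm := (@mulr_mod r n).
Local Notation rr := (@rroot r F).
Local Notation N := (m * totient n)%N.

Lemma iter_ract j x : iter j ra x = (iter j mm x.1, iter j rr x.2).
Proof. by elim: j => [|j IH]; [case: x | rewrite !iterS IH]. Qed.

Lemma iter_mm j (i : 'I_n) : val (iter j mm i) = (r ^ j * i) %% n.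
Proof.
elim: j => [|j IH]; first by rewrite /= mul1n modn_small.
by rewrite iterS /= IH modnMmr mulnA -expnS.
Qed.

Lemma N_gt0 : (0 < N)%N.
Proof. by rewrite muln_gt0 m_gt0 // totient_gt0 n_gt0. Qed.

Lemma iter_period x : iter N ra x = x.
Proof.
case: x => i a; rewrite iter_ract /=; congr (_, _).
  apply: val_inj; rewrite iter_mm.
  have E : r ^ N = 1 %[mod n].
    by rewrite mulnC expnM -modnXm Euler_exp_totient ?cop_r // modnXm exp1n.
  by rewrite -modnMml E modnMml mul1n modn_small.
by have := iter_rroot N a; rewrite expnM rpowKt.
Qed.

Lemma ra_inj : injective ra.
Proof.
move=> x y E; rewrite -[x]iter_period -[y]iter_period -(prednK N_gt0).
by rewrite !iterSr E.
Qed.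

Lemma ra_Sx x : (ra x \in Sx n F) = (x \in Sx n F).
Proof.
case: x => i a; rewrite !inE /= coprime_modl coprimeMl cop_r /=; congr andb.
by rewrite -{2}(rroot_spec a) expf_eq0 expn_gt0 prime_gt0.
Qed.

Lemma conn_Sx x y : fconnect ra x y -> (x \in Sx n F) = (y \in Sx n F).
Proof. by apply: closed_connect => u v /eqP <-; rewrite ra_Sx. Qed.

Lemma Ox_part : partition (Ox r n F) (Sx n F).
Proof.
have -> : Ox r n F = equivalence_partition (fconnect ra) (Sx n F).
  apply: eq_in_imset => x Hx; apply/setP => y; rewrite !inE.
  case C: (fconnect ra x y); rewrite ?andbT ?andbF //.
  by rewrite (conn_Sx C) in Hx; rewrite inE in Hx; rewrite Hx.
apply: equivalence_partitionP => x y z _ _ _; split; first exact: connect0.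
by move=> Rxy; apply: (same_connect (fconnect_sym ra_inj)) Rxy z.
Qed.

Lemma card_Sx : #|Sx n F| = (totient n * (#|F| - 1))%N.
Proof.
have -> : Sx n F = setX [set i : 'I_n | coprime i n] [set~ (0%R : F)].
  by apply/setP => [[i a]]; rewrite !inE.
rewrite cardsX cardsC1 subn1; congr (_ * _)%N.
rewrite totient_count_coprime big_mkord -sum1_card big_mkcond /=.
by apply: eq_bigr => i _; rewrite inE coprime_sym; case: coprime.
Qed.

Lemma part1 : (\sum_(o in Ox r n F) #|o|)%N = #|Sx n F|.
Proof. by rewrite (card_partition Ox_part). Qed.


Lemma card_rorbit x : #|rorbit r x| = order ra x.
Proof. by apply: eq_card => y; rewrite inE. Qed.

Lemma iter_mod j x : iter j ra x = iter (j %% N) ra x.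
Proof.
rewrite {1}(divn_eq j N) iterD.
elim: (j %/ N) => [|q IH] //.
by rewrite mulSn iterD IH iter_period.
Qed.

Lemma order_le x : order ra x <= N.
Proof.
rewrite /order -[X in _ <= X](size_mkseq (fun j => iter j ra x) N).
apply: leq_trans (card_size _); apply: subset_leq_card; apply/subsetP => y Hy.
apply/mapP; exists (findex ra x y %% N); first by rewrite mem_iota ltn_pmod ?N_gt0.
by rewrite -iter_mod iter_findex.
Qed.

Definition Vj j : {set F} := [set a : F | (a != 0%R) && (a ^+ (r ^ j.+1) == a)%R].

Lemma card_Vj j : #|Vj j| <= r ^ j.+1.
Proof.
have R1 : 0 < (r ^ j.+1).-1.
  rewrite -ltnS prednK ?expn_gt0 ?prime_gt0 //.
  apply: (leq_trans (prime_gt1 pp)); rewrite -expnM.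
  by rewrite -{1}(expn1 p) leq_exp2l ?prime_gt1 // muln_gt0 k0.
apply: leq_trans (leq_pred _); rewrite cardE.
apply: max_unity_roots => //; last exact: enum_uniq.
apply/allP => a; rewrite mem_enum inE unity_rootE => /andP [a0 /eqP E].
apply/eqP; apply: (mulIf a0); rewrite mul1r -exprSr prednK ?E //.
by rewrite expn_gt0 expn_gt0 prime_gt0.
Qed.

Lemma card_bigcupV L : #|\bigcup_(j < L) Vj j| <= \sum_(j < L) #|Vj j|.
Proof.
elim: L => [|L IH]; first by rewrite !big_ord0 cards0.
rewrite !big_ord_recr /=; apply: leq_trans (leq_card_setU _ _) _.
by rewrite leq_add2r.
Qed.

Lemma Ox_bound L :
  #|Ox r n F| * L.+1 <= n * (L * r ^ L) * L.+1 + n * p ^ m.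
Proof.
pose B := [set o : {set 'I_n * F} | #|o| <= L].
rewrite -(cardsID B) mulnDl; apply: leq_add.
  apply: leq_mul => //.
  pose T := [set x in Sx n F | order ra x <= L].
  apply: (@leq_trans (#|(@rorbit r n F) @: T|)).
    apply: subset_leq_card; apply/subsetP => o; rewrite !inE => /andP [/imsetP [x Hx ->] Hs].
    by apply: imset_f; rewrite inE Hx -card_rorbit.
  apply: leq_trans (leq_imset_card _ _) _.
  apply: (@leq_trans (#|setX [set: 'I_n] (\bigcup_(j < L) Vj j)|)).
    apply: subset_leq_card; apply/subsetP => -[i a]; rewrite !inE /= => /andP [/andP [_ a0] oL].
    have o0 := order_gt0 ra (i, a).
    have jL : (order ra (i, a)).-1 < L by rewrite prednK.
    apply/bigcupP; exists (Ordinal jL) => //.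
    rewrite inE a0 /= prednK //.
    have := iter_order ra_inj (i, a); rewrite iter_ract => -[_ E].
    by apply/eqP; rewrite -{1}E iter_rroot.
  rewrite cardsX cardsT card_ord; apply: leq_mul => //.
  apply: leq_trans (card_bigcupV L) _.
  rewrite -[X in _ <= X * _](card_ord L) -sum_nat_const; apply: leq_sum => j _.
  apply: leq_trans (card_Vj j) _; apply: leq_pexp2l; first by rewrite expn_gt0 prime_gt0.
  exact: ltn_ord.
apply: (@leq_trans (\sum_(o in Ox r n F :\: B) #|o|)).
  rewrite -sum_nat_const; apply: leq_sum => o; rewrite !inE -ltnNge => /andP [].
  by [].
apply: (@leq_trans (\sum_(o in Ox r n F) #|o|)).
  by rewrite (big_setID (A := Ox r n F) B) leq_addl.
rewrite part1 card_Sx cardF leq_mul ?leq_subr //.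
rewrite totient_count_coprime; apply: (@leq_trans (\sum_(0 <= d < n) 1)).
  by apply: leq_sum => i _; exact: leq_b1.
by rewrite sum_nat_const_nat subn0 muln1.
Qed.


Lemma Ox_bound2 : #|Ox r n F| * m <= 8 * k * n * p ^ m.
Proof.
set L := m %/ (4 * k).
have k4 : 0 < 4 * k by rewrite muln_gt0.
have hm : m < L.+1 * (4 * k) := ltn_ceil m k4.
have hL : L * (4 * k) <= m := leq_trunc_div m (4 * k).
have hLp : L < p ^ L := ltn_expl L (prime_gt1 pp).
have key : L * r ^ L * L.+1 <= p ^ m.
  apply: (@leq_trans (p ^ L * p ^ (k * L) * p ^ L)).
    by rewrite -expnM; apply: leq_mul; [apply: leq_mul; [apply: ltnW|] |].
  rewrite -!expnD; apply: leq_pexp2l; first exact: prime_gt0.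
  nia.
have B := Ox_bound L.
apply: (@leq_trans (#|Ox r n F| * (L.+1 * (4 * k)))).
  by rewrite leq_mul2l (ltnW hm) orbT.
rewrite mulnA.
apply: (@leq_trans ((n * (L * r ^ L) * L.+1 + n * p ^ m) * (4 * k))).
  by rewrite leq_mul2r B orbT.
move: key; rewrite -!mulnA; set Y := L * _; set P := p ^ m.
move=> key.
have H : n * Y * (4 * k) <= n * P * (4 * k) by rewrite leq_mul2r leq_mul2l key !orbT.
nia.
Qed.

Lemma orbit_size o : o \in Ox r n F -> 0 < #|o| <= n * m.
Proof.
case/imsetP => x _ ->; rewrite card_rorbit order_gt0 /=.
apply: leq_trans (order_le x) _; rewrite mulnC leq_mul2r.
apply/orP; right; rewrite totient_count_coprime; apply: (@leq_trans (\sum_(0 <= d < n) 1)).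
  by apply: leq_sum => i _; exact: leq_b1.
by rewrite sum_nat_const_nat subn0 muln1.
Qed.

End Alg.

Section Real.
Local Open Scope R_scope.

Lemma ln_le' x y : 0 < x -> x <= y -> ln x <= ln y.
Proof.
move=> x0 [xy|->]; last exact: Rle_refl.
exact: Rlt_le (ln_increasing _ _ x0 xy).
Qed.

Lemma INR_expn p m : INR (expn p m) = INR p ^ m.
Proof.
elim: m => [|m IH] //.
by rewrite expnS mult_INR IH.
Qed.

Lemma INR_leq a b : (a <= b)%N -> INR a <= INR b.
Proof. by move/leP; apply: le_INR. Qed.

Lemma INR_leq_inv a b : INR a <= INR b -> (a <= b)%N.
Proof. by move/INR_le/leP. Qed.

Lemma lnp_gt0 p : (1 < p)%N -> 0 < ln (INR p).
Proof.
move=> p1; rewrite -ln_1; apply: ln_increasing; first lra.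
have := INR_leq p1; rewrite /=; lra.
Qed.

Lemma lnq p m : (1 < p)%N -> ln (INR (expn p m)) = INR m * ln (INR p).
Proof.
move=> p1; rewrite INR_expn ln_pow //.
have := INR_leq (ltnW p1); rewrite /=; lra.
Qed.

Lemma real2 (X K p m : nat) : (X * m <= K * expn p m)%N -> (0 < m)%N -> (1 < p)%N ->
  INR X <= INR K * ln (INR p) * INR (expn p m) / ln (INR (expn p m)).
Proof.
move=> H m0 p1; rewrite lnq //.
have lp := lnp_gt0 p1.
have mp : 0 < INR m by apply: lt_0_INR; apply/ltP.
have H' := INR_leq H; rewrite !mult_INR in H'.
replace (INR K * ln (INR p) * INR (expn p m) / (INR m * ln (INR p)))
  with (INR K * INR (expn p m) / INR m) by (field; lra).
apply: (Rmult_le_reg_r (INR m)) => //.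
replace (INR K * INR (expn p m) / INR m * INR m) with (INR K * INR (expn p m)) by (field; lra).
exact: H'.
Qed.

Lemma Rsum_le (T : finType) (A : {pred T}) (f : T -> R) D :
  (forall o, o \in A -> f o <= D) ->
  \big[Rplus/0]_(o in A) f o <= INR #|A| * D.
Proof.
move=> H.
apply: (@Rle_trans _ (\big[Rplus/0]_(o in A) D)).
  apply: (big_ind2 (fun a b => a <= b)); first exact: Rle_refl.
    by move=> *; apply: Rplus_le_compat.
  exact: H.
rewrite big_const; elim: #|A| => [|c IH] /=; first lra.
change (D + iter c (Rplus D) 0 <= INR c.+1 * D); rewrite S_INR; lra.
Qed.


Lemma real3 (X K p m n : nat) (S : R) :
  (X * m <= K * expn p m)%N -> (0 < m)%N -> (1 < p)%N -> (0 < n)%N -> (4 * n <= m)%N ->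
  S <= INR X * ln (INR (n * m)) ->
  S <= 2 * INR K * ln (INR p) * INR (expn p m) * ln (ln (INR (expn p m)))
         / ln (INR (expn p m)).
Proof.
move=> H m0 p1 n0 nm HS; rewrite lnq //.
have lp := lnp_gt0 p1.
have mp : 0 < INR m by apply: lt_0_INR; apply/ltP.
have np : 1 <= INR n by have := INR_leq n0.
have H' := INR_leq H; rewrite !mult_INR in H'.
have n0r : 0 < INR n by lra.
rewrite (ln_mult _ _ mp lp).
rewrite mult_INR (ln_mult _ _ n0r mp) in HS.
have l2 := ln_lt_2.
have lp2 : ln 2 <= ln (INR p).
  apply: ln_le'; first lra.
  by have := INR_leq p1.
have b2 : ln (/ 2) <= ln (ln (INR p)) by apply: ln_le'; lra.
rewrite ln_Rinv in b2; last lra.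
have a4 : ln (INR (4 * n)) <= ln (INR m).
  apply: ln_le'; last exact: INR_leq.
  rewrite mult_INR; simpl; lra.
have l4 : ln (INR 4) = 2 * ln 2.
  replace (INR 4) with (2 * 2) by (simpl; lra).
  rewrite ln_mult; lra.
rewrite mult_INR ln_mult in a4; [|simpl; lra|lra].
rewrite l4 in a4.
have n0' : 0 <= ln (INR n).
  rewrite -ln_1; apply: ln_le'; lra.
set a := ln (INR m) in HS a4 *; set b := ln (ln (INR p)) in b2 *.
have hab : 0 <= a + b by lra.
have hD : ln (INR n) + a <= 2 * (a + b) by lra.
have X0 : 0 <= INR X := pos_INR X.
apply: (Rle_trans _ _ _ HS).
apply: (Rle_trans _ (INR X * (2 * (a + b)))); first by apply: Rmult_le_compat_l.
replace (2 * INR K * ln (INR p) * INR (expn p m) * (a + b) / (INR m * ln (INR p)))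
  with (2 * (a + b) * (INR K * INR (expn p m)) / INR m) by (field; lra).
apply: (Rmult_le_reg_r (INR m)) => //.
replace (2 * (a + b) * (INR K * INR (expn p m)) / INR m * INR m)
  with (2 * (a + b) * (INR K * INR (expn p m))) by (field; lra).
replace (INR X * (2 * (a + b)) * INR m) with (2 * (a + b) * (INR X * INR m)) by ring.
apply: Rmult_le_compat_l; lra.
Qed.

End Real.

From Stdlib Require Import Reals.

Theorem lemma11p3 (p r n : nat) :
  prime p -> (exists k, (0 < k)%N /\ r = expn p k) -> coprime n p ->
  (forall (F : finFieldType) (m : nat), #|F| = expn p m ->
     (\sum_(o in Ox r n F) #|o|)%N = #|Sx n F| /\
     #|Sx n F| = (totient n * (#|F| - 1))%N) /\
  (exists C Q0 : R, forall (F : finFieldType) (m : nat), #|F| = expn p m ->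
     (Q0 <= INR #|F|)%R ->
     (INR #|Ox r n F| <= C * INR #|F| / ln (INR #|F|))%R) /\
  (exists C Q0 : R, forall (F : finFieldType) (m : nat), #|F| = expn p m ->
     (Q0 <= INR #|F|)%R ->
     (\big[Rplus/0%R]_(o in Ox r n F) ln (INR #|o|)
        <= C * INR #|F| * ln (ln (INR #|F|)) / ln (INR #|F|))%R).
Proof.
move=> pp [k [k0 ->]] cnp.
have p1 := prime_gt1 pp.
split; [|split].
- move=> F m cF; split; first exact: (part1 pp k0 cnp cF).
  exact: card_Sx.
- exists (INR (8 * k * n) * ln (INR p))%R, 0%R => F m cF _.
  rewrite cF; apply: real2 => //; last exact: (m_gt0 cF).
  exact: (Ox_bound2 pp k0 cnp cF).
- exists (2 * INR (8 * k * n) * ln (INR p))%R, (INR (expn p (4 * n)))%R => F m cF HQ.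
  rewrite cF in HQ *.
  have nm : (4 * n <= m)%N by move: (INR_leq_inv HQ); rewrite leq_exp2l.
  apply: (real3 (Ox_bound2 pp k0 cnp cF) (m_gt0 cF) p1 (n_gt0 pp cnp) nm).
  apply: Rsum_le => o Ho.
  have /andP [o0 om] := orbit_size pp k0 cnp cF Ho.
  apply: ln_le'; first by apply: lt_0_INR; apply/ltP.
  exact: INR_leq.
Qed.
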